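(* Let $\mathbb{P}=\{(x,y)\in\mathbb{R}^2: x^2+y^2<1\}$ be the Poincaré disc model of the hyperbolic plane, with distance $d_{\mathbb{P}}(u,v)=\operatorname{arccosh}(1+\mathfrak{p}(u,v))$, where $\mathfrak{p}(u,v)=\frac{2\|u-v\|^2}{(1-\|u\|^2)(1-\|v\|^2)}$ and $\|\cdot\|$ is the Euclidean norm. Let $\lambda>0$, $\varepsilon>0$, and let $Q=Q(\lambda,\varepsilon)$ be the geodesic quadrilateral in $\mathbb{P}$ with vertices $(\pm a,\pm b)$ ($a,b>0$), where $a,b$ are chosen so that the hyperbolic distance between the midpoint of the upper side $U$ (from $(a,b)$ to $(-a,b)$) and the midpoint of the lower side $L$ (from $(a,-b)$ to $(-a,-b)$) is $\lambda$, and the hyperbolic distance between the midpoints of the other two sides (the left side and the right side) is $\varepsilon$. Then: (i) the unique shortest path in $Q$ from $L$ to $U$ is a segment of the $y$-axis; (ii) there exists $\alpha=\alpha(\lambda,\varepsilon)>0$ such that every path in $Q$ from $L$ to $U$ which meets either the left side or the right side of $Q$ has length at least $\lambda+\alpha$.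
   Context: In the Poincaré disc model the geodesics are the circular arcs (and diameters) orthogonal to the unit circle; a geodesic quadrilateral is the region bounded by four such geodesic segments. *)

(* Defs.v *)
From Stdlib Require Import Reals Lra.
Open Scope R_scope.

Definition pt : Type := (R * R)%type.
Definition sub (u v : pt) : pt := (fst u - fst v, snd u - snd v).
Definition nsq (u : pt) : R := fst u * fst u + snd u * snd u.

Definition in_disc (u : pt) : Prop := nsq u < 1.

Definition arccosh (x : R) : R := ln (x + sqrt (x * x - 1)).

Definition pfun (u v : pt) : R :=
  2 * nsq (sub u v) / ((1 - nsq u) * (1 - nsq v)).

Definition dP (u v : pt) : R := arccosh (1 + pfun u v).

(* A circle (center c, radius r) orthogonal to the unit circle:
   these carry the non-diametral geodesics of the disc. *)
Definition orth_circle (c : pt) (r : R) : Prop := 0 < r /\ nsq c = 1 + r * r.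
Definition on_circle (c : pt) (r : R) (z : pt) : Prop := nsq (sub z c) = r * r.

Definition on_geodesic (p q z : pt) : Prop :=
  exists c r, orth_circle c r /\ on_circle c r p /\ on_circle c r q /\ on_circle c r z.

(* z lies in the closed hyperbolic half-plane bounded by the geodesic through p q
   that contains the origin (outside of the orthogonal circle). *)
Definition halfplane (p q z : pt) : Prop :=
  forall c r, orth_circle c r -> on_circle c r p -> on_circle c r q ->
    r * r <= nsq (sub z c).

Definition vUR (a b : R) : pt := (a, b).
Definition vUL (a b : R) : pt := (- a, b).
Definition vLL (a b : R) : pt := (- a, - b).
Definition vLR (a b : R) : pt := (a, - b).

Definition quadQ (a b : R) (z : pt) : Prop :=
  in_disc z /\
  halfplane (vUR a b) (vUL a b) z /\ halfplane (vUL a b) (vLL a b) z /\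
  halfplane (vLL a b) (vLR a b) z /\ halfplane (vLR a b) (vUR a b) z.

Definition side (a b : R) (p q z : pt) : Prop := quadQ a b z /\ on_geodesic p q z.

Definition sideU (a b : R) := side a b (vUR a b) (vUL a b).
Definition sideL (a b : R) := side a b (vLR a b) (vLL a b).
Definition sideLeft (a b : R) := side a b (vUL a b) (vLL a b).
Definition sideRight (a b : R) := side a b (vUR a b) (vLR a b).

Definition hmid (a b : R) (p q m : pt) : Prop :=
  side a b p q m /\ dP p m = dP m q.

Definition cont01 (g : R -> pt) : Prop :=
  forall t, 0 <= t <= 1 -> forall e, 0 < e -> exists d, 0 < d /\
    forall s, 0 <= s <= 1 -> Rabs (s - t) < d -> nsq (sub (g s) (g t)) < e * e.

Definition partition (s : nat -> R) (n : nat) : Prop :=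
  s 0%nat = 0 /\ s n = 1 /\ forall i, (i < n)%nat -> s i <= s (S i).

Fixpoint chord_sum (g : R -> pt) (s : nat -> R) (n : nat) : R :=
  match n with
  | O => 0
  | S k => chord_sum g s k + dP (g (s k)) (g (s (S k)))
  end.

Definition has_length (g : R -> pt) (l : R) : Prop :=
  is_lub (fun x => exists s n, partition s n /\ x = chord_sum g s n) l.

Definition path_LU (a b : R) (g : R -> pt) : Prop :=
  cont01 g /\ (forall t, 0 <= t <= 1 -> quadQ a b (g t)) /\
  sideL a b (g 0) /\ sideU a b (g 1).

Definition shortest_LU (a b : R) (g : R -> pt) : Prop :=
  path_LU a b g /\ exists l, has_length g l /\
    forall g' l', path_LU a b g' -> has_length g' l' -> l <= l'.

(* Main.v *)
Require Import Defs.
From Stdlib Require Import Reals Lra Psatz Lia.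
Open Scope R_scope.

Lemma ln_le' x y : 0 < x -> x <= y -> ln x <= ln y.
Proof. intros Hx Hxy. destruct (Rle_lt_or_eq_dec _ _ Hxy) as [H|H].
  - left; apply ln_increasing; auto.
  - subst; lra. Qed.

Lemma acosh_mono x y : 1 <= x -> x <= y -> arccosh x <= arccosh y.
Proof. intros H1 H2. unfold arccosh. apply ln_le'.
  - pose proof (sqrt_pos (x*x-1)); lra.
  - assert (sqrt (x*x-1) <= sqrt (y*y-1)) by (apply sqrt_le_1_alt; nra). lra. Qed.

Lemma acosh_strict x y : 1 <= x -> x < y -> arccosh x < arccosh y.
Proof. intros H1 H2. unfold arccosh. apply ln_increasing.
  - pose proof (sqrt_pos (x*x-1)); lra.
  - assert (sqrt (x*x-1) <= sqrt (y*y-1)) by (apply sqrt_le_1_alt; nra). lra. Qed.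

Lemma acosh_le_inv x y : 1 <= x -> 1 <= y -> arccosh x <= arccosh y -> x <= y.
Proof. intros H1 H2 H. destruct (Rle_or_lt x y) as [h|h]; auto.
  pose proof (acosh_strict y x H2 h). lra. Qed.

Lemma acosh_add x y : 1 <= x -> 1 <= y ->
  arccosh x + arccosh y = arccosh (x*y + sqrt (x*x-1) * sqrt (y*y-1)).
Proof. intros Hx Hy. unfold arccosh.
  set (sx := sqrt (x*x-1)). set (sy := sqrt (y*y-1)).
  assert (Hsx: sx*sx = x*x-1) by (apply sqrt_sqrt; nra).
  assert (Hsy: sy*sy = y*y-1) by (apply sqrt_sqrt; nra).
  assert (sx >= 0) by (pose proof (sqrt_pos (x*x-1)); unfold sx; lra).
  assert (sy >= 0) by (pose proof (sqrt_pos (y*y-1)); unfold sy; lra).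
  rewrite <- ln_mult by nra. f_equal.
  assert (E: (x*y+sx*sy)*(x*y+sx*sy)-1 = (x*sy+y*sx)*(x*sy+y*sx)) by nra.
  rewrite E, sqrt_square by nra. ring. Qed.

Definition H0 (z : pt) := (1 + nsq z) / (1 - nsq z).
Definition H1 (z : pt) := 2 * fst z / (1 - nsq z).
Definition H2 (z : pt) := 2 * snd z / (1 - nsq z).

Lemma nsq_nonneg z : 0 <= nsq z.
Proof. unfold nsq; nra. Qed.

Lemma Hprod u v : in_disc u -> in_disc v ->
  1 + pfun u v = H0 u * H0 v - H1 u * H1 v - H2 u * H2 v.
Proof. unfold in_disc, pfun, H0, H1, H2, nsq, sub; simpl. intros hu hv.
  field; split; lra. Qed.

Lemma Hnorm z : in_disc z -> H0 z * H0 z - H1 z * H1 z - H2 z * H2 z = 1 /\ 0 < H0 z.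
Proof. unfold in_disc, H0, H1, H2, nsq. intros h. split.
  - field; lra.
  - apply Rdiv_lt_0_compat; nra. Qed.

Lemma pfun_sym u v : pfun u v = pfun v u.
Proof. unfold pfun, nsq, sub; simpl. field_simplify_eq. ring.
Abort.
Lemma pfun_sym u v : pfun u v = pfun v u.
Proof. unfold pfun, nsq, sub; simpl. rewrite (Rmult_comm (1 - _)). f_equal. f_equal. ring. Qed.

Lemma RCS_abs X0 X1 X2 Z0 Z1 Z2 c r :
  X0*X0 - X1*X1 - X2*X2 = 1 -> 0 < X0 ->
  Z0*Z0 - Z1*Z1 - Z2*Z2 = 1 -> 0 < Z0 ->
  X0 = c * X2 -> r*r = c*c - 1 -> 0 < r ->
  sqrt (1 + ((Z0 - c*Z2)/r) * ((Z0 - c*Z2)/r)) <= X0*Z0 - X1*Z1 - X2*Z2.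
Proof. intros hX hX0 hZ hZ0 hc hr r0.
  set (I := X0*Z0 - X1*Z1 - X2*Z2).
  set (k := (Z0 - c*Z2)/r).
  set (al := X2 * r). set (m := (c*Z0 - Z2)/r).
  assert (hI: I = al*m - X1*Z1) by (unfold I, al, m; rewrite hc; field; lra).
  assert (ha: al*al - X1*X1 = 1) by (unfold al; rewrite <- hX, hc; nra).
  assert (hm: m*m - Z1*Z1 = 1 + k*k).
  { unfold m, k. apply (Rmult_eq_reg_r (r*r)); [|nra].
    field_simplify; try lra. replace (r^2) with (c*c-1) by (rewrite <- hr; ring).
    replace (Z0^2) with (1 + Z1*Z1 + Z2*Z2) by (rewrite <- hZ; ring). ring. }
  assert (Ipos: 0 <= I).
  { unfold I. assert ((X1*Z1+X2*Z2)*(X1*Z1+X2*Z2) <= (X1*X1+X2*X2)*(Z1*Z1+Z2*Z2)).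
    { pose proof (Rle_0_sqr (X1*Z2 - X2*Z1)); unfold Rsqr in *; nra. }
    assert ((X1*X1+X2*X2)*(Z1*Z1+Z2*Z2) < (X0*Z0)*(X0*Z0)).
    { replace (X1*X1+X2*X2) with (X0*X0-1) by lra.
      replace (Z1*Z1+Z2*Z2) with (Z0*Z0-1) by lra. nra. }
    assert (0 < X0*Z0) by nra.
    nra. }
  assert (I*I >= 1 + k*k).
  { rewrite hI. assert ((al*m - X1*Z1)*(al*m-X1*Z1) - (al*al-X1*X1)*(m*m-Z1*Z1) = (al*Z1 - m*X1)*(al*Z1-m*X1)) by ring.
    rewrite ha, hm in H. pose proof (Rle_0_sqr (al*Z1 - m*X1)) as Hs; unfold Rsqr in Hs; lra. }
  rewrite <- (sqrt_square I) by lra. apply sqrt_le_1_alt. lra. Qed.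

Lemma lineBound c r w z : in_disc w -> in_disc z -> nsq w + 1 = 2*c*snd w ->
  r*r = c*c - 1 -> 0 < r ->
  sqrt (1 + ((H0 z - c*H2 z)/r) * ((H0 z - c*H2 z)/r)) <= 1 + pfun w z.
Proof. intros hw hz hl hr r0. rewrite Hprod by auto.
  destruct (Hnorm w hw) as [nw pw], (Hnorm z hz) as [nz pz].
  apply RCS_abs; auto.
  unfold H0, H2. unfold in_disc in hw. replace (1 + nsq w) with (2*c*snd w) by lra. field. lra. Qed.

Lemma combo kL kU a1 T : 1 < T -> 0 <= a1 ->
  kL*kL + kU*kU + 2*T*(kL*kU) = (T*T-1)*(1+a1) ->
  let W := sqrt (1+kL*kL) * sqrt (1+kU*kU) + Rabs kL * Rabs kU in
  W*W >= T*T + (T*T-1)*a1 /\ T <= W /\ (W <= T -> a1 = 0 /\ 0 <= kL*kU).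
Proof. intros hT ha hid W.
  set (s := sqrt (1+kL*kL) * sqrt (1+kU*kU)).
  assert (hs: s*s = (1+kL*kL)*(1+kU*kU)).
  { unfold s. rewrite <- sqrt_mult_alt by nra. apply sqrt_sqrt. nra. }
  assert (s0: 0 <= s) by (unfold s; apply Rmult_le_pos; apply sqrt_pos).
  set (P := kL*kU). set (AP := Rabs kL * Rabs kU).
  assert (hAP: AP = Rabs P) by (unfold AP, P; rewrite Rabs_mult; auto).
  assert (hP1: P <= AP) by (rewrite hAP; apply Rle_abs).
  assert (AP0: 0 <= AP) by (rewrite hAP; apply Rabs_pos).
  assert (hP2: AP*AP = P*P) by (rewrite hAP, <- Rabs_mult; apply Rabs_pos_eq; nra).
  assert (hW: W = s + AP) by reflexivity.
  assert (F1: W*W - 2*W*AP = 1 + (kL*kL+kU*kU)).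
  { rewrite hW. replace ((s+AP)*(s+AP) - 2*(s+AP)*AP) with (s*s - AP*AP) by ring.
    rewrite hs, hP2. unfold P. ring. }
  assert (F3: kL*kL+kU*kU >= 2*AP).
  { unfold AP. pose proof (Rle_0_sqr (Rabs kL - Rabs kU)) as h. unfold Rsqr in h.
    assert (Rabs kL * Rabs kL = kL*kL) by (rewrite <- Rabs_mult; apply Rabs_pos_eq; nra).
    assert (Rabs kU * Rabs kU = kU*kU) by (rewrite <- Rabs_mult; apply Rabs_pos_eq; nra).
    nra. }
  assert (s1: 1 <= s).
  { destruct (Rle_or_lt 1 s); auto. assert (s*s < 1) by nra. nra. }
  assert (W1: 1 <= W) by lra.
  assert (TW: T <= W).
  { destruct (Rle_or_lt T W) as [h|h]; auto. exfalso.
    assert (h1: 2*AP*(W+1) <= W*W-1) by nra.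
    assert (h2: 2*AP <= W - 1).
    { apply (Rmult_le_reg_r (W+1)); [lra|]. nra. }
    assert (h3: (T*T-1)*(1+a1) <= W*W - 1 + 2*(T-W)*AP).
    { rewrite <- hid. fold P. nra. }
    assert (h4: 2*(T-W)*AP <= (T-W)*(W-1)) by nra.
    assert (h5: (T*T-1)*(1+a1) <= (W-1)*(T+1)) by nra.
    assert (h6: (T-1)*(1+a1) <= W-1).
    { apply (Rmult_le_reg_r (T+1)); [lra|]. nra. }
    nra. }
  assert (M: W*W - 1 >= (T*T-1)*(1+a1)).
  { rewrite <- hid. fold P. nra. }
  split; [nra|]. split; auto.
  intros hWT. assert (WT: W = T) by lra.
  assert (E: T*T - 1 = kL*kL+kU*kU + 2*T*AP) by (rewrite <- WT; lra).
  assert (a0: a1 = 0).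
  { assert (TP: T*P <= T*AP) by (apply Rmult_le_compat_l; lra).
    fold P in hid.
    assert ((T*T-1)*a1 <= 0) by nra.
    assert (0 < T*T-1) by nra. nra. }
  split; auto. fold P. subst a1. fold P in hid.
  assert (T*P = T*AP) by nra.
  assert (P = AP) by (apply (Rmult_eq_reg_l T); lra). lra.
Qed.

Definition cyv a b := (1+a*a+b*b)/(2*b).
Definition rv a b := sqrt (cyv a b * cyv a b - 1).
Definition y0v a b := cyv a b - rv a b.
Definition Tv a b := 1 + 2/(rv a b * rv a b).
Definition dv a b := (1+a*a+b*b)/(2*a).
Definition kUf a b z := (H0 z - cyv a b * H2 z) / rv a b.
Definition kLf a b z := (H0 z - (- cyv a b) * H2 z) / rv a b.
Definition Wf a b z := sqrt (1 + kLf a b z * kLf a b z) * sqrt (1 + kUf a b z * kUf a b z)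
   + Rabs (kLf a b z) * Rabs (kUf a b z).

Lemma basics a b : 0 < a -> 0 < b -> a*a+b*b < 1 ->
  1 < cyv a b /\ 0 < rv a b /\ rv a b * rv a b = cyv a b * cyv a b - 1 /\
  0 < y0v a b /\ y0v a b < 1 /\ y0v a b * y0v a b - 2 * cyv a b * y0v a b + 1 = 0 /\
  1 < Tv a b /\ 1 < dv a b.
Proof. intros ha hb hab.
  assert (c1: 1 < cyv a b).
  { unfold cyv. apply (Rmult_lt_reg_r (2*b)); [lra|]. field_simplify; nra. }
  assert (rr: rv a b * rv a b = cyv a b * cyv a b - 1) by (unfold rv; apply sqrt_sqrt; nra).
  assert (r0: 0 < rv a b) by (unfold rv; apply sqrt_lt_R0; nra).
  assert (ry: rv a b < cyv a b) by nra.
  assert (ry1: cyv a b - 1 < rv a b) by nra.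
  unfold y0v. repeat split; auto; try lra; try nra.
  - unfold Tv. assert (0 < 2/(rv a b * rv a b)) by (apply Rdiv_lt_0_compat; nra). lra.
  - unfold dv. apply (Rmult_lt_reg_r (2*a)); [lra|]. field_simplify; nra.
Qed.

Lemma kid a b z : 0 < a -> 0 < b -> a*a+b*b < 1 -> in_disc z ->
  kLf a b z * kLf a b z + kUf a b z * kUf a b z + 2 * Tv a b * (kLf a b z * kUf a b z)
  = (Tv a b * Tv a b - 1) * (1 + H1 z * H1 z).
Proof. intros ha hb hab hz. destruct (basics a b ha hb hab) as (c1 & r0 & rr & _).
  destruct (Hnorm z hz) as [hn _].
  unfold kLf, kUf, Tv. set (r := rv a b) in *. set (c := cyv a b) in *.
  set (Z0 := H0 z) in *. set (Z1 := H1 z) in *. set (Z2 := H2 z) in *.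
  apply (Rmult_eq_reg_r (r*r*r*r)); [|apply Rgt_not_eq; repeat apply Rmult_lt_0_compat; lra].
  field_simplify; try lra.
  replace (r^2) with (c*c-1) by (rewrite <- rr; ring).
  replace (Z0^2) with (1 + Z1*Z1 + Z2*Z2) by (rewrite <- hn; ring). ring.
Qed.

Lemma three_point a b u z v : 0 < a -> 0 < b -> a*a+b*b < 1 ->
  in_disc u -> in_disc z -> in_disc v ->
  nsq u + 1 = 2 * (- cyv a b) * snd u -> nsq v + 1 = 2 * cyv a b * snd v ->
  arccosh (Wf a b z) <= dP u z + dP z v.
Proof. intros ha hb hab hu hz hv hlu hlv.
  destruct (basics a b ha hb hab) as (c1 & r0 & rr & _).
  pose proof (lineBound (- cyv a b) (rv a b) u z hu hz hlu ltac:(nra) r0) as BL.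
  pose proof (lineBound (cyv a b) (rv a b) v z hv hz hlv rr r0) as BU.
  fold (kLf a b z) in BL. fold (kUf a b z) in BU.
  set (kL := kLf a b z) in *. set (kU := kUf a b z) in *.
  unfold dP. rewrite (pfun_sym z v).
  set (X := sqrt (1 + kL*kL)). set (Y := sqrt (1+kU*kU)).
  assert (X1: 1 <= X) by (unfold X; apply Rle_trans with (sqrt 1); [rewrite sqrt_1; lra| apply sqrt_le_1_alt; nra]).
  assert (Y1: 1 <= Y) by (unfold Y; apply Rle_trans with (sqrt 1); [rewrite sqrt_1; lra| apply sqrt_le_1_alt; nra]).
  assert (XX: X*X = 1+kL*kL) by (unfold X; apply sqrt_sqrt; nra).
  assert (YY: Y*Y = 1+kU*kU) by (unfold Y; apply sqrt_sqrt; nra).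
  assert (E: Wf a b z = X*Y + sqrt (X*X-1) * sqrt (Y*Y-1)).
  { unfold Wf. fold kL kU X Y. rewrite XX, YY.
    replace (1+kL*kL-1) with (kL*kL) by ring. replace (1+kU*kU-1) with (kU*kU) by ring.
    rewrite <- !Rsqr_def, !sqrt_Rsqr_abs. reflexivity. }
  rewrite E, <- acosh_add by auto.
  fold X in BL. fold Y in BU.
  pose proof (acosh_mono X _ X1 BL). pose proof (acosh_mono Y _ Y1 BU). lra.
Qed.

Lemma on_orth c r z : orth_circle c r -> on_circle c r z ->
  nsq z - 2*(fst z * fst c + snd z * snd c) + 1 = 0.
Proof. unfold orth_circle, on_circle, nsq, sub; simpl. intros [_ h1] h2. nra. Qed.

Lemma half_orth c r z : orth_circle c r ->
  0 <= nsq z - 2*(fst z * fst c + snd z * snd c) + 1 -> r*r <= nsq (sub z c).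
Proof. unfold orth_circle, on_circle, nsq, sub; simpl. intros [_ h1] h2. nra. Qed.

Lemma centerU a b c r : 0 < a -> 0 < b -> orth_circle c r ->
  on_circle c r (a,b) -> on_circle c r (-a,b) -> fst c = 0 /\ snd c = cyv a b.
Proof. intros ha hb ho h1 h2. pose proof (on_orth _ _ _ ho h1) as e1.
  pose proof (on_orth _ _ _ ho h2) as e2. unfold nsq in *; simpl in *.
  assert (fst c = 0) by nra. split; auto. unfold cyv. rewrite H in e1.
  apply (Rmult_eq_reg_r (2*b)); [|lra]. field_simplify; lra. Qed.

Lemma centerL a b c r : 0 < a -> 0 < b -> orth_circle c r ->
  on_circle c r (a,-b) -> on_circle c r (-a,-b) -> fst c = 0 /\ snd c = - cyv a b.
Proof. intros ha hb ho h1 h2. pose proof (on_orth _ _ _ ho h1) as e1.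
  pose proof (on_orth _ _ _ ho h2) as e2. unfold nsq in *; simpl in *.
  assert (fst c = 0) by nra. split; auto. unfold cyv. rewrite H in e1.
  apply (Rmult_eq_reg_r (2*b)); [|lra]. field_simplify; lra. Qed.

Lemma centerR a b c r : 0 < a -> 0 < b -> orth_circle c r ->
  on_circle c r (a,b) -> on_circle c r (a,-b) -> snd c = 0 /\ fst c = dv a b.
Proof. intros ha hb ho h1 h2. pose proof (on_orth _ _ _ ho h1) as e1.
  pose proof (on_orth _ _ _ ho h2) as e2. unfold nsq in *; simpl in *.
  assert (snd c = 0) by nra. split; auto. unfold dv. rewrite H in e1.
  apply (Rmult_eq_reg_r (2*a)); [|lra]. field_simplify; lra. Qed.

Lemma centerLe a b c r : 0 < a -> 0 < b -> orth_circle c r ->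
  on_circle c r (-a,b) -> on_circle c r (-a,-b) -> snd c = 0 /\ fst c = - dv a b.
Proof. intros ha hb ho h1 h2. pose proof (on_orth _ _ _ ho h1) as e1.
  pose proof (on_orth _ _ _ ho h2) as e2. unfold nsq in *; simpl in *.
  assert (snd c = 0) by nra. split; auto. unfold dv. rewrite H in e1.
  apply (Rmult_eq_reg_r (2*a)); [|lra]. field_simplify; lra. Qed.

Lemma lineU a b z : 0 < a -> 0 < b -> on_geodesic (vUR a b) (vUL a b) z ->
  nsq z + 1 = 2 * cyv a b * snd z.
Proof. intros ha hb (c & r & ho & h1 & h2 & h3).
  destruct (centerU a b c r ha hb ho h1 h2) as [e1 e2].
  pose proof (on_orth _ _ _ ho h3). rewrite e1, e2 in H. lra. Qed.

Lemma lineL a b z : 0 < a -> 0 < b -> on_geodesic (vLR a b) (vLL a b) z ->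
  nsq z + 1 = 2 * (- cyv a b) * snd z.
Proof. intros ha hb (c & r & ho & h1 & h2 & h3).
  destruct (centerL a b c r ha hb ho h1 h2) as [e1 e2].
  pose proof (on_orth _ _ _ ho h3). rewrite e1, e2 in H. lra. Qed.

Lemma lineR a b z : 0 < a -> 0 < b -> on_geodesic (vUR a b) (vLR a b) z ->
  nsq z + 1 = 2 * dv a b * fst z.
Proof. intros ha hb (c & r & ho & h1 & h2 & h3).
  destruct (centerR a b c r ha hb ho h1 h2) as [e1 e2].
  pose proof (on_orth _ _ _ ho h3). rewrite e1, e2 in H. lra. Qed.

Lemma lineLe a b z : 0 < a -> 0 < b -> on_geodesic (vUL a b) (vLL a b) z ->
  nsq z + 1 = 2 * (- dv a b) * fst z.
Proof. intros ha hb (c & r & ho & h1 & h2 & h3).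
  destruct (centerLe a b c r ha hb ho h1 h2) as [e1 e2].
  pose proof (on_orth _ _ _ ho h3). rewrite e1, e2 in H. lra. Qed.

Lemma axis_in_Q a b y : 0 < a -> 0 < b -> a*a+b*b < 1 ->
  - y0v a b <= y <= y0v a b -> quadQ a b (0, y).
Proof. intros ha hb hab hy.
  destruct (basics a b ha hb hab) as (c1 & r0 & rr & y00 & y01 & yeq & _).
  set (y1 := cyv a b + rv a b).
  assert (p: y0v a b * y1 = 1) by (unfold y1, y0v; nra).
  assert (s: y0v a b + y1 = 2 * cyv a b) by (unfold y1, y0v; ring).
  assert (y11: 1 < y1) by (unfold y1; lra).
  unfold quadQ. repeat split.
  - unfold in_disc, nsq; simpl. nra.
  - intros c r ho h1 h2. destruct (centerU a b c r ha hb ho h1 h2) as [e1 e2].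
    apply (half_orth _ _ _ ho). rewrite e1, e2. unfold nsq; simpl. nra.
  - intros c r ho h1 h2. destruct (centerLe a b c r ha hb ho h1 h2) as [e1 e2].
    apply (half_orth _ _ _ ho). rewrite e1. unfold nsq; simpl. nra.
  - intros c r ho h1 h2. destruct (centerL a b c r ha hb ho h2 h1) as [e1 e2].
    apply (half_orth _ _ _ ho). rewrite e1, e2. unfold nsq; simpl. nra.
  - intros c r ho h1 h2. destruct (centerR a b c r ha hb ho h2 h1) as [e1 e2].
    apply (half_orth _ _ _ ho). rewrite e1. unfold nsq; simpl. nra.
Qed.

Lemma pfun_nonneg u v : in_disc u -> in_disc v -> 0 <= pfun u v.
Proof. unfold in_disc, pfun, nsq, sub; simpl; intros hu hv.
  unfold Rdiv. destruct u as [u1 u2], v as [v1 v2]; simpl in *. apply Rmult_le_pos; [apply Rmult_le_pos; [lra|]; apply Rplus_le_le_0_compat; apply Rle_0_sqr|]. apply Rlt_le, Rinv_0_lt_compat. nra. Qed.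

Lemma acosh_inj x y : 1 <= x -> 1 <= y -> arccosh x = arccosh y -> x = y.
Proof. intros. apply Rle_antisym; apply acosh_le_inv; lra. Qed.

Lemma mid_x p1 p2 m : p1 <> 0 -> p1*p1+p2*p2 < 1 -> in_disc m ->
  dP (p1,p2) m = dP m (-p1,p2) -> fst m = 0.
Proof. intros h1 h2 hm e. unfold dP in e.
  assert (hp: in_disc (p1,p2)) by (unfold in_disc, nsq; simpl; lra).
  assert (hq: in_disc (-p1,p2)) by (unfold in_disc, nsq; simpl; lra).
  pose proof (pfun_nonneg _ _ hp hm). pose proof (pfun_nonneg _ _ hm hq).
  apply acosh_inj in e; try lra.
  unfold pfun, nsq, sub, in_disc, nsq in *; simpl in *.
  destruct m as [x y]; simpl in *.
  assert (e2: (p1 - x) * (p1 - x) + (p2 - y) * (p2 - y) = (x - - p1) * (x - - p1) + (y - p2) * (y - p2)).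
  { assert (0 < (1 - (p1*p1+p2*p2)) * (1 - (x*x+y*y))) by nra.
    apply (Rmult_eq_reg_r (2 / ((1 - (p1*p1+p2*p2)) * (1 - (x*x+y*y))))).
    - replace (- p1 * - p1) with (p1*p1) in e by ring.
      unfold Rdiv in *. rewrite (Rmult_comm (1 - (x*x+y*y))) in e.
      lra.
    - apply Rgt_not_eq, Rdiv_lt_0_compat; lra. }
  nra. Qed.

Lemma root_unique a b y : 0 < a -> 0 < b -> a*a+b*b < 1 ->
  y*y < 1 -> y*y + 1 = 2 * cyv a b * y -> y = y0v a b.
Proof. intros ha hb hab h1 h2.
  destruct (basics a b ha hb hab) as (c1 & r0 & rr & y00 & y01 & yeq & _).
  assert ((y - y0v a b) * (y + y0v a b - 2 * cyv a b) = 0) by nra.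
  assert (y < 1) by nra.
  apply Rmult_integral in H. destruct H; lra. Qed.

Lemma midU a b m : 0 < a -> 0 < b -> a*a+b*b < 1 ->
  hmid a b (vUR a b) (vUL a b) m -> m = (0, y0v a b).
Proof. intros ha hb hab [[hq hg] e].
  assert (hm: in_disc m) by apply hq.
  pose proof (mid_x a b m ltac:(lra) hab hm e) as hx.
  pose proof (lineU a b m ha hb hg) as hl.
  destruct m as [x y]; simpl in *. subst x.
  unfold in_disc, nsq in *; simpl in *.
  f_equal. apply root_unique; auto; nra. Qed.

Lemma midL a b m : 0 < a -> 0 < b -> a*a+b*b < 1 ->
  hmid a b (vLR a b) (vLL a b) m -> m = (0, - y0v a b).
Proof. intros ha hb hab [[hq hg] e].
  assert (hm: in_disc m) by apply hq.
  pose proof (mid_x a (-b) m ltac:(lra) ltac:(nra) hm e) as hx.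
  pose proof (lineL a b m ha hb hg) as hl.
  destruct m as [x y]; simpl in *. subst x.
  unfold in_disc, nsq in *; simpl in *.
  f_equal. replace y with (- - y) by ring. f_equal. apply root_unique; auto; nra. Qed.

Lemma lam_val a b : 0 < a -> 0 < b -> a*a+b*b < 1 ->
  dP (0, y0v a b) (0, - y0v a b) = arccosh (Tv a b).
Proof. intros ha hb hab.
  destruct (basics a b ha hb hab) as (c1 & r0 & rr & y00 & y01 & yeq & _).
  unfold dP, Tv. f_equal. f_equal. unfold pfun, nsq, sub; simpl.
  assert (e: 1 - (0*0 + y0v a b * y0v a b) = 2 * y0v a b * rv a b) by (unfold y0v in *; nra).
  replace (1 - (0*0 + - y0v a b * - y0v a b)) with (1 - (0*0 + y0v a b * y0v a b)) by ring.
  rewrite e. field. split; lra. Qed.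

Definition Fax y := ln ((1+y)/(1-y)).

Lemma axis_dist y1 y2 : -1 < y1 -> y1 <= y2 -> y2 < 1 ->
  dP (0,y1) (0,y2) = Fax y2 - Fax y1.
Proof. intros h1 h2 h3. unfold dP, Fax, arccosh.
  set (E := ((1+y2)*(1-y1))/((1-y2)*(1+y1))).
  assert (E1: 1 <= E).
  { unfold E. apply (Rmult_le_reg_r ((1-y2)*(1+y1))); [nra|]. field_simplify; nra. }
  set (X := 1 + pfun (0,y1) (0,y2)).
  assert (hX: X = (E + /E)/2).
  { unfold X, E, pfun, nsq, sub; simpl. field. repeat split; nra. }
  assert (hs: sqrt (X*X-1) = (E - /E)/2).
  { assert (X*X-1 = ((E - /E)/2)*((E - /E)/2)) by (rewrite hX; field; lra).
    rewrite H. apply sqrt_square.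
    assert (/E <= 1) by (rewrite <- Rinv_1; apply Rinv_le_contravar; lra). lra. }
  rewrite hs, hX. replace ((E + / E) / 2 + (E - / E) / 2) with E by (field; lra).
  assert (q1: 0 < (1+y2)/(1-y2)) by (apply Rdiv_lt_0_compat; lra).
  assert (q2: 0 < (1+y1)/(1-y1)) by (apply Rdiv_lt_0_compat; lra).
  replace E with (((1+y2)/(1-y2)) * / ((1+y1)/(1-y1))) by (unfold E; field; repeat split; lra).
  rewrite ln_mult, ln_Rinv; try lra. apply Rinv_0_lt_compat; lra.
Qed.

Definition clamp t := Rmax 0 (Rmin 1 t).
Definition yv a b t := - y0v a b + 2 * y0v a b * clamp t.
Definition gpath a b (t : R) : pt := (0, yv a b t).

Lemma clamp_range t : 0 <= clamp t <= 1.
Proof. unfold clamp, Rmax, Rmin. repeat destruct Rle_dec; lra. Qed.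
Lemma clamp_mono s t : s <= t -> clamp s <= clamp t.
Proof. unfold clamp, Rmax, Rmin. repeat destruct Rle_dec; lra. Qed.
Lemma clamp_lip s t : Rabs (clamp s - clamp t) <= Rabs (s - t).
Proof. unfold clamp, Rmax, Rmin. repeat destruct Rle_dec; unfold Rabs; repeat destruct Rcase_abs; lra. Qed.
Lemma clamp_id t : 0 <= t <= 1 -> clamp t = t.
Proof. unfold clamp, Rmax, Rmin. repeat destruct Rle_dec; lra. Qed.

Section S.
Variables a b : R.
Hypotheses (ha : 0 < a) (hb : 0 < b) (hab : a*a+b*b < 1).

Lemma yv_range t : - y0v a b <= yv a b t <= y0v a b.
Proof. destruct (basics a b ha hb hab) as (c1 & r0 & rr & y00 & y01 & _).
  pose proof (clamp_range t). unfold yv. nra. Qed.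

Lemma yv_mono s t : s <= t -> yv a b s <= yv a b t.
Proof. destruct (basics a b ha hb hab) as (c1 & r0 & rr & y00 & y01 & _).
  intros h. pose proof (clamp_mono s t h). unfold yv. nra. Qed.

Definition Phi t := Fax (yv a b t).

Lemma chord_tele s n : (forall i, (i < n)%nat -> s i <= s (S i)) ->
  chord_sum (gpath a b) s n = Phi (s n) - Phi (s O).
Proof. destruct (basics a b ha hb hab) as (c1 & r0 & rr & y00 & y01 & _).
  induction n as [|n IH]; intros h; simpl.
  - ring.
  - rewrite IH by (intros; apply h; lia).
    unfold gpath. rewrite axis_dist.
    + unfold Phi. ring.
    + pose proof (yv_range (s n)). lra.
    + apply yv_mono, h. lia.
    + pose proof (yv_range (s (S n))). lra.
Qed.

Lemma yv0 : yv a b 0 = - y0v a b.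
Proof. unfold yv. rewrite clamp_id by lra. ring. Qed.
Lemma yv1 : yv a b 1 = y0v a b.
Proof. unfold yv. rewrite clamp_id by lra. ring. Qed.

Lemma dP_sym u v : dP u v = dP v u.
Proof. unfold dP. rewrite pfun_sym. auto. Qed.

Lemma Phi_total : Phi 1 - Phi 0 = arccosh (Tv a b).
Proof. destruct (basics a b ha hb hab) as (c1 & r0 & rr & y00 & y01 & _).
  unfold Phi. rewrite yv0, yv1. rewrite <- axis_dist by lra.
  rewrite dP_sym. apply lam_val; auto. Qed.

Lemma gpath_len : has_length (gpath a b) (arccosh (Tv a b)).
Proof. split.
  - intros x (s & n & (h0 & h1 & h2) & ->). rewrite chord_tele by auto.
    rewrite h0, h1, Phi_total. lra.
  - intros m hm. apply hm. exists (fun i => match i with O => 0 | _ => 1 end), 1%nat.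
    split.
    + repeat split. intros i hi. destruct i; simpl; lra.
    + rewrite chord_tele.
      * simpl. rewrite Phi_total. auto.
      * intros i hi. destruct i; simpl; lra.
Qed.

Lemma gpath_cont : cont01 (gpath a b).
Proof. destruct (basics a b ha hb hab) as (c1 & r0 & rr & y00 & y01 & _).
  intros t ht e he. exists (e / (2 * y0v a b + 1)). split.
  - apply Rdiv_lt_0_compat; lra.
  - intros s hs hst. unfold gpath, sub, nsq, yv; simpl.
    set (x := 2 * y0v a b * (clamp s - clamp t)).
    replace (- y0v a b + 2 * y0v a b * clamp s - (- y0v a b + 2 * y0v a b * clamp t)) with x by (unfold x; ring).
    assert (hx: Rabs x < e).
    { unfold x. rewrite Rabs_mult, (Rabs_pos_eq (2 * y0v a b)) by lra.
      pose proof (clamp_lip s t).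
      assert (Rabs (s - t) * (2 * y0v a b + 1) < e).
      { apply (Rmult_lt_compat_r (2 * y0v a b + 1)) in hst; [|lra].
        unfold Rdiv in hst. rewrite Rmult_assoc, Rinv_l in hst; lra. }
      pose proof (Rabs_pos (s - t)). pose proof (Rabs_pos (clamp s - clamp t)). nra. }
    assert (x * x = Rabs x * Rabs x) by (rewrite <- Rabs_mult; rewrite Rabs_pos_eq; nra).
    pose proof (Rabs_pos x). nra.
Qed.

Lemma gpath_Q t : quadQ a b (gpath a b t).
Proof. apply axis_in_Q; auto. apply yv_range. Qed.

Lemma gpath_L : sideL a b (gpath a b 0).
Proof. destruct (basics a b ha hb hab) as (c1 & r0 & rr & y00 & y01 & yeq & _).
  split; [apply gpath_Q|]. unfold gpath. rewrite yv0.
  exists (0, - cyv a b), (rv a b). unfold orth_circle, on_circle, nsq, sub, vLR, vLL; simpl.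
  assert (hc: 2 * b * cyv a b = 1 + a*a + b*b) by (unfold cyv; field; lra).
  repeat split; auto; try nra; unfold y0v in *; nra. Qed.

Lemma gpath_U : sideU a b (gpath a b 1).
Proof. destruct (basics a b ha hb hab) as (c1 & r0 & rr & y00 & y01 & yeq & _).
  split; [apply gpath_Q|]. unfold gpath. rewrite yv1.
  exists (0, cyv a b), (rv a b). unfold orth_circle, on_circle, nsq, sub, vUR, vUL; simpl.
  assert (hc: 2 * b * cyv a b = 1 + a*a + b*b) by (unfold cyv; field; lra).
  repeat split; auto; try nra; unfold y0v in *; nra. Qed.

Lemma gpath_path : path_LU a b (gpath a b).
Proof. split; [apply gpath_cont|]. split; [intros; apply gpath_Q|]. split; [apply gpath_L|apply gpath_U]. Qed.
End S.

Section S.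
Variables a b : R.
Hypotheses (ha : 0 < a) (hb : 0 < b) (hab : a*a+b*b < 1).

Lemma Wprops z : in_disc z ->
  Wf a b z * Wf a b z >= Tv a b * Tv a b + (Tv a b * Tv a b - 1) * (H1 z * H1 z) /\
  Tv a b <= Wf a b z /\
  (Wf a b z <= Tv a b -> H1 z * H1 z = 0 /\ 0 <= kLf a b z * kUf a b z).
Proof. intros hz. destruct (basics a b ha hb hab) as (c1 & r0 & rr & y00 & y01 & yeq & T1 & _).
  pose proof (combo (kLf a b z) (kUf a b z) (H1 z * H1 z) (Tv a b) T1
    ltac:(apply Rle_0_sqr) (kid a b z ha hb hab hz)) as C.
  simpl in C. exact C. Qed.

Lemma path_bound g t l : path_LU a b g -> 0 <= t <= 1 -> has_length g l ->
  arccosh (Wf a b (g t)) <= l.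
Proof. intros (hc & hq & [hq0 hg0] & [hq1 hg1]) ht [hub _].
  apply Rle_trans with (dP (g 0) (g t) + dP (g t) (g 1)).
  - apply (three_point a b (g 0) (g t) (g 1) ha hb hab).
    + apply hq0.
    + apply (hq t ht).
    + apply hq1.
    + apply lineL; auto.
    + apply lineU; auto.
  - apply hub. exists (fun i => match i with O => 0 | 1%nat => t | _ => 1 end), 2%nat.
    split.
    + repeat split. intros i hi. destruct i as [|[|i]]; simpl; lra.
    + simpl. ring.
Qed.

Lemma H1_zero z : in_disc z -> H1 z * H1 z = 0 -> fst z = 0.
Proof. intros hz h. unfold in_disc in hz.
  assert (e: H1 z = 0) by (apply Rmult_integral in h; destruct h; auto).
  unfold H1 in e. assert (2 * fst z = 0).
  { replace (2 * fst z) with (2 * fst z / (1 - nsq z) * (1 - nsq z)) by (field; lra).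
    rewrite e. ring. }
  lra. Qed.

Lemma axis_char z : in_disc z -> fst z = 0 -> 0 <= kLf a b z * kUf a b z ->
  - y0v a b <= snd z <= y0v a b.
Proof. destruct (basics a b ha hb hab) as (c1 & r0 & rr & y00 & y01 & yeq & T1 & _).
  intros hz hx hk. destruct z as [x y]; simpl in *; subst x.
  unfold in_disc, nsq in hz; simpl in hz.
  unfold kLf, kUf, H0, H2, nsq in hk; simpl in hk.
  set (c := cyv a b) in *. set (r := rv a b) in *. set (y0 := y0v a b) in *.
  assert (hp: 0 < 1 - (0*0+y*y)) by lra.
  assert (h2: 0 <= (1 + (0*0+y*y))*(1 + (0*0+y*y)) - 4*c*c*(y*y)).
  { replace ((1 + (0*0+y*y))*(1 + (0*0+y*y)) - 4*c*c*(y*y)) with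
      (((1 + (0 * 0 + y * y)) / (1 - (0 * 0 + y * y)) - - c * (2 * y / (1 - (0 * 0 + y * y)))) / r *
      (((1 + (0 * 0 + y * y)) / (1 - (0 * 0 + y * y)) - c * (2 * y / (1 - (0 * 0 + y * y)))) / r)
      * (r*r*(1 - (0*0+y*y))*(1 - (0*0+y*y)))) by (field; lra).
    apply Rmult_le_pos; auto. apply Rmult_le_pos; [|lra]. apply Rmult_le_pos; [nra|lra]. }
  set (y1 := c + r).
  assert (p: y0 * y1 = 1) by (unfold y1, y0, y0v in *; fold c r; nra).
  assert (s: y0 + y1 = 2 * c) by (unfold y1, y0, y0v; fold c r; ring).
  assert (y11: 1 < y1) by (unfold y1; lra).
  assert (hy: 1 + y*y >= 2*c*Rabs y).
  { assert ((1+y*y)*(1+y*y) >= (2*c*Rabs y)*(2*c*Rabs y)).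
    { assert (Rabs y * Rabs y = y*y) by (rewrite <- Rabs_mult; apply Rabs_pos_eq; nra). nra. }
    pose proof (Rabs_pos y). nra. }
  assert (Rabs y <= y0).
  { destruct (Rle_or_lt (Rabs y) y0); auto.
    assert (Rabs y < 1) by (apply Rabs_def1; nra).
    assert (Rabs y * Rabs y = y*y) by (rewrite <- Rabs_mult; apply Rabs_pos_eq; nra).
    nra. }
  unfold Rabs in H; destruct Rcase_abs in H; lra. Qed.

Lemma H1_side z e : in_disc z -> nsq z + 1 = 2 * e * fst z -> e * e = dv a b * dv a b ->
  1 / (dv a b * dv a b) <= H1 z * H1 z.
Proof. intros hz hl he. destruct (basics a b ha hb hab) as (_ & _ & _ & _ & _ & _ & _ & d1).
  unfold in_disc in hz. pose proof (nsq_nonneg z).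
  set (d := dv a b) in *. set (n := nsq z) in *. set (x := fst z) in *.
  assert (h1: 4*x*x*(d*d) >= 1) by (rewrite <- he; nra).
  assert (h2: 4*x*x >= 1/(d*d)).
  { apply Rle_ge. apply (Rmult_le_reg_r (d*d)); [nra|]. field_simplify; nra. }
  unfold H1. fold x n.
  assert (EQ: 2 * x / (1 - n) * (2 * x / (1 - n)) = 4*x*x / ((1-n)*(1-n))) by (field; lra).
  rewrite EQ.
  assert (4*x*x <= 4*x*x / ((1-n)*(1-n))).
  { apply (Rmult_le_reg_r ((1-n)*(1-n))); [nra|]. field_simplify; [|lra]. nra. }
  lra. Qed.

End S.

Lemma cont_snd g y : cont01 g -> continuity (fun t => snd (g (clamp t)) - y).
Proof. intros hc x0 eps heps.
  destruct (hc (clamp x0) (clamp_range x0) eps heps) as (d & hd & hd2).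
  exists d. split; auto. intros x [_ hx]. simpl in *. unfold R_dist in *.
  assert (h: Rabs (clamp x - clamp x0) < d) by (pose proof (clamp_lip x x0); lra).
  specialize (hd2 (clamp x) (clamp_range x) h).
  unfold nsq, sub in hd2; simpl in hd2.
  set (u := snd (g (clamp x)) - snd (g (clamp x0))) in *.
  replace (snd (g (clamp x)) - y - (snd (g (clamp x0)) - y)) with u by (unfold u; ring).
  assert (u*u < eps*eps) by (pose proof (Rle_0_sqr (fst (g (clamp x)) - fst (g (clamp x0)))); unfold Rsqr in *; lra).
  apply Rabs_def1; nra. Qed.

Theorem lemmaL1 (lam eps a b : R) :
  0 < lam -> 0 < eps -> 0 < a -> 0 < b -> a * a + b * b < 1 ->
  (exists mU mL, hmid a b (vUR a b) (vUL a b) mU /\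
                 hmid a b (vLR a b) (vLL a b) mL /\ dP mU mL = lam) ->
  (exists mLe mRi, hmid a b (vUL a b) (vLL a b) mLe /\
                   hmid a b (vUR a b) (vLR a b) mRi /\ dP mLe mRi = eps) ->
  (exists y1 y2, y1 <= y2 /\ (exists g, shortest_LU a b g) /\
     forall g, shortest_LU a b g ->
       forall z : pt, (exists t, 0 <= t <= 1 /\ g t = z) <->
                      (fst z = 0 /\ y1 <= snd z <= y2)) /\
  (exists alpha, 0 < alpha /\
     forall g, path_LU a b g ->
       (exists t, 0 <= t <= 1 /\ (sideLeft a b (g t) \/ sideRight a b (g t))) ->
       forall l, has_length g l -> lam + alpha <= l).
Proof. intros hlam heps ha hb hab (mU & mL & hU & hL & hd) _.
  destruct (basics a b ha hb hab) as (c1 & r0 & rr & y00 & y01 & yeq & T1 & d1).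
  rewrite (midU a b mU ha hb hab hU), (midL a b mL ha hb hab hL), lam_val in hd; auto.
  subst lam.
  assert (LB: forall g l, path_LU a b g -> has_length g l -> arccosh (Tv a b) <= l).
  { intros g l hp hl. pose proof (path_bound a b ha hb hab g 0 l hp ltac:(lra) hl).
    destruct hp as (_ & hq & _).
    destruct (Wprops a b ha hb hab (g 0)) as (_ & hW & _); [apply (hq 0); lra|].
    pose proof (acosh_mono (Tv a b) (Wf a b (g 0)) ltac:(lra) hW). lra. }
  assert (SP: forall g t, shortest_LU a b g -> 0 <= t <= 1 ->
             fst (g t) = 0 /\ - y0v a b <= snd (g t) <= y0v a b).
  { intros g t (hp & l & hl & hmin) ht.
    pose proof (hmin _ _ (gpath_path a b ha hb hab) (gpath_len a b ha hb hab)) as hle.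
    pose proof (path_bound a b ha hb hab g t l hp ht hl) as hpb.
    destruct hp as (_ & hq & _).
    assert (hz: in_disc (g t)) by apply (hq t ht).
    destruct (Wprops a b ha hb hab (g t) hz) as (_ & hW & hE).
    assert (Wf a b (g t) <= Tv a b) by (apply acosh_le_inv; lra).
    destruct (hE H) as [h1 h2].
    pose proof (H1_zero (g t) hz h1) as hx.
    split; auto. apply axis_char; auto. }
  split.
  - exists (- y0v a b), (y0v a b). split; [lra|]. split.
    + exists (gpath a b). split; [apply gpath_path; auto|].
      exists (arccosh (Tv a b)). split; [apply gpath_len; auto|].
      intros g' l' hp hl. apply (LB g' l' hp hl).
    + intros g hs z. split.
      * intros (t & ht & <-). apply SP; auto.
      * intros (hx & hy).
        pose proof hs as (hp & _). destruct hp as (hc & hq & [hq0 hg0] & [hq1 hg1]).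
        assert (e0: snd (g 0) = - y0v a b).
        { destruct (SP g 0 hs ltac:(lra)) as [x0 r0'].
          pose proof (lineL a b _ ha hb hg0) as hl0.
          unfold nsq in hl0. rewrite x0 in hl0.
          assert (- snd (g 0) = y0v a b).
          { apply root_unique; auto; [|nra]. destruct hq0 as [hd0 _]. unfold in_disc, nsq in hd0.
            rewrite x0 in hd0. nra. }
          lra. }
        assert (e1: snd (g 1) = y0v a b).
        { destruct (SP g 1 hs ltac:(lra)) as [x0 r0'].
          pose proof (lineU a b _ ha hb hg1) as hl0.
          unfold nsq in hl0. rewrite x0 in hl0.
          apply root_unique; auto; [|nra]. destruct hq1 as [hd0 _]. unfold in_disc, nsq in hd0.
          rewrite x0 in hd0. nra. }
        destruct (IVT_cor _ 0 1 (cont_snd g (snd z) hc) ltac:(lra)) as (t & ht & hft).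
        { rewrite !clamp_id by lra. rewrite e0, e1. nra. }
        exists t. split; auto. rewrite clamp_id in hft by lra.
        destruct (SP g t hs ht) as [hxt _].
        destruct z as [zx zy]. simpl in *. destruct (g t) as [gx gy] eqn:E. simpl in *.
        f_equal; lra.
  - set (T := Tv a b). set (d := dv a b).
    assert (T1x : 1 < T) by exact T1. assert (d1x : 1 < d) by exact d1.
    set (B := sqrt (T*T + (T*T-1) * (1/(d*d)))).
    assert (TB: T < B).
    { unfold B. rewrite <- (sqrt_square T) at 1 by lra. apply sqrt_lt_1_alt. split; [apply Rle_0_sqr|].
      assert (0 < (T*T-1) * (1/(d*d))).
      { apply Rmult_lt_0_compat; [nra|]. apply Rdiv_lt_0_compat; nra. }
      lra. }
    exists (arccosh B - arccosh T). split.
    { pose proof (acosh_strict T B ltac:(lra) TB). lra. }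
    intros g hp (t & ht & hs) l hl.
    pose proof (path_bound a b ha hb hab g t l hp ht hl) as hpb.
    destruct hp as (_ & hq & _).
    assert (hz: in_disc (g t)) by apply (hq t ht).
    destruct (Wprops a b ha hb hab (g t) hz) as (hW2 & hW & _).
    assert (hH: 1/(d*d) <= H1 (g t) * H1 (g t)).
    { destruct hs as [[_ hg]|[_ hg]].
      - apply (H1_side a b ha hb hab (g t) (- dv a b)); auto. apply lineLe; auto. ring.
      - apply (H1_side a b ha hb hab (g t) (dv a b)); auto. apply lineR; auto. }
    assert (BW: B <= Wf a b (g t)).
    { unfold B. rewrite <- (sqrt_square (Wf a b (g t))) by (fold T in hW; lra).
      apply sqrt_le_1_alt. fold T in hW2.
      assert ((T*T-1)*(1/(d*d)) <= (T*T-1)*(H1 (g t) * H1 (g t))) by (apply Rmult_le_compat_l; nra).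
      lra. }
    pose proof (acosh_mono B _ ltac:(lra) BW). lra.
Qed.
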